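(* Let $\mu$ be a continuous probability measure on $\mathbb{R}^n$ and $\alpha\in[0,1]$. If $S\subset\mathbb{R}^n$ is a compact, connected set with $\mu(S)\ge\max\{\alpha,1-\alpha\}$, then there exists a function $f:S^{n-1}\to\mathbb{R}^n$ such that $\mu\big(H^+_{v,\langle v,f(v)\rangle}\big)=\alpha$ for all $v\in S^{n-1}$ and $\operatorname{Im} f\subset S$.
   Context: A continuous probability measure on $\mathbb{R}^n$ is a Borel probability measure absolutely continuous with respect to Lebesgue measure. For $v\ne 0$, $\lambda\in\mathbb{R}$: $H^+_{v,\lambda}=\{x\in\mathbb{R}^n:\langle x,v\rangle\ge\lambda\}$. *)

(* Defs.v *)
From HB Require Import structures.
From mathcomp Require Import all_boot all_order all_algebra.
From mathcomp Require Import all_classical all_reals all_analysis.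
Set Implicit Arguments. Unset Strict Implicit. Unset Printing Implicit Defensive.
Import Order.TTheory GRing.Theory Num.Theory.
Import numFieldNormedType.Exports.
Local Open Scope classical_set_scope.
Local Open Scope ring_scope.

(* Points of R^n are row vectors 'rV[R]_n (with their standard topology).
   For measure theory we use n.-tuple R, equipped by MathComp-Analysis with
   the product (= Borel) sigma-algebra; the two are identified by the
   canonical bijection below. *)
Definition rV_of_tuple {R : realType} {n : nat} (t : n.-tuple R) : 'rV[R]_n :=
  \row_i tnth t i.

Definition dotp {R : realType} {n : nat} (x y : 'rV[R]_n) : R :=
  \sum_(i < n) x ord0 i * y ord0 i.

Definition unit_sphere (R : realType) (n : nat) : set 'rV[R]_n :=
  [set v | dotp v v = 1].

Definition halfspace_pos {R : realType} {n : nat} (v : 'rV[R]_n) (lam : R)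
  : set 'rV[R]_n := [set x | lam <= dotp x v].

Definition box {R : realType} {n : nat} (a b : n.-tuple R) : set (n.-tuple R) :=
  [set x | forall i : 'I_n, tnth a i <= tnth x i <= tnth b i].

Definition box_volume {R : realType} {n : nat} (a b : n.-tuple R) : R :=
  \prod_(i < n) (tnth b i - tnth a i).

Definition lebesgue_null {R : realType} {n : nat} (A : set (n.-tuple R)) : Prop :=
  forall eps : R, 0 < eps ->
    exists a b : nat -> n.-tuple R,
      (forall k (i : 'I_n), tnth (a k) i <= tnth (b k) i) /\
      A `<=` \bigcup_k box (a k) (b k) /\
      (\sum_(0 <= k <oo) (box_volume (a k) (b k))%:E < eps%:E)%E.

(* A continuous probability measure on R^n: a Borel probability measure that is
   absolutely continuous w.r.t. Lebesgue measure. *)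
Definition continuous_prob {R : realType} {n : nat}
  (mu : probability (n.-tuple R) R) : Prop :=
  forall A : set (n.-tuple R), measurable A -> lebesgue_null A -> mu A = 0%E.

Definition muR {R : realType} {n : nat} (mu : probability (n.-tuple R) R)
  (A : set 'rV[R]_n) : \bar R := mu (rV_of_tuple @^-1` A).
Arguments unit_sphere R n : clear implicits.

(* Main.v *)
Require Import Defs.
From HB Require Import structures.
From mathcomp Require Import all_boot all_order all_algebra.
From mathcomp Require Import all_classical all_reals all_analysis.
From mathcomp Require Import ring lra.
Import Order.TTheory GRing.Theory Num.Theory.
Import numFieldNormedType.Exports.
Local Open Scope classical_set_scope.
Local Open Scope ring_scope.
Section meas.
Context (R : realType) (n : nat).

Lemma coord_meas (i : 'I_n) (B : set R) : measurable B ->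
  measurable [set x : n.-tuple R | B (tnth x i)].
Proof.
by move=> mB; have := measurable_tnth i measurableT mB; rewrite setTI.
Qed.

Lemma box_meas (a b : n.-tuple R) : measurable (box a b).
Proof.
pose F k := match @insub nat (fun k => (k < n)%N) 'I_n k with
  | Some i => [set x : n.-tuple R | tnth a i <= tnth x i <= tnth b i]
  | None => setT end.
have -> : box a b = \bigcap_k F k.
  apply/seteqP; split => x.
    move=> hx k _; rewrite /F; case: insubP => // i _ _; exact: hx.
  move=> hx i; have := hx (val i) I; by rewrite /F valK.
apply: bigcapT_measurable => k; rewrite /F; case: insubP => //= i _ _.
have -> : [set x : n.-tuple R | tnth a i <= tnth x i <= tnth b i] =
   [set x | [set` `[tnth a i, tnth b i]] (tnth x i)].
  by apply/seteqP; split => x /=; rewrite in_itv.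
exact: coord_meas.
Qed.

Definition rbox (p : n.-tuple rat * n.-tuple rat) : set (n.-tuple R) :=
  box [tuple ratr (tnth p.1 i) | i < n] [tuple ratr (tnth p.2 i) | i < n].

Lemma closed_meas (S : set 'rV[R]_n) : closed S ->
  measurable (rV_of_tuple @^-1` S).
Proof.
move=> cS.
pose O := rV_of_tuple @^-1` (~` S).
pose G k := match @unpickle (n.-tuple rat * n.-tuple rat)%type k with
  | Some p => if `[< rbox p `<=` O >] then rbox p else set0
  | None => set0 end.
have mG k : measurable (G k).
  rewrite /G; case: unpickle => // p; case: ifP => // _; exact: box_meas.
have OE : O = \bigcup_k G k.
  apply/seteqP; split => x; last first.
    move=> [k _]; rewrite /G; case: unpickle => // p; case: ifP => // /asboolP; exact.
  move=> Ox.
  have : nbhs (rV_of_tuple x) (~` S).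
    by apply: open_nbhs_nbhs; split => //; exact: closed_openC.
  move=> /nbhs_ballP [e /= e0 he].
  have q1 (i : 'I_n) : {q : rat | ratr q \in `](tnth x i - e), (tnth x i)[}.
    by apply: cid; apply: rat_in_itvoo; rewrite ltrBlDr ltrDl.
  have q2 (i : 'I_n) : {q : rat | ratr q \in `](tnth x i), (tnth x i + e)[}.
    by apply: cid; apply: rat_in_itvoo; rewrite ltrDl.
  pose p := ([tuple sval (q1 i) | i < n], [tuple sval (q2 i) | i < n]).
  have sub : rbox p `<=` O.
    move=> y hy; rewrite /O /=; apply: he.
    rewrite mx_norm_ball /ball_ /=.
    change (mx_norm (rV_of_tuple x - rV_of_tuple y) < e); rewrite mx_normrE.
    apply: bigmax_lt => // -[i j] _ /=.
    rewrite (ord1 i) !mxE.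
    have := hy j; rewrite !tnth_mktuple /=.
    case: (q1 j) => /= a; rewrite in_itv /= => /andP[ha _].
    case: (q2 j) => /= b; rewrite in_itv /= => /andP[_ hb].
    move=> /andP[h1 h2].
    rewrite ltr_norml; apply/andP; split; lra.
  exists (pickle p) => //; rewrite /G pickleK.
  rewrite asboolT //= => j; rewrite !tnth_mktuple.
  case: (q1 j) => /= a; rewrite in_itv /= => /andP[_ /ltW ->].
  by case: (q2 j) => /= b; rewrite in_itv /= => /andP[/ltW -> _].
have -> : rV_of_tuple @^-1` S = ~` O.
  by apply/seteqP; split => x /=; rewrite /O /= ?notK //; move=> h1 h2; apply: h2.
apply: measurableC; rewrite OE; exact: bigcupT_measurable.
Qed.

End meas.
Lemma grid (R : realType) (M : nat) (w y : R) : 0 < w -> 0 <= y -> y <= M.+1%:R * w ->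
  exists q : 'I_M.+1, q%:R * w <= y <= q.+1%:R * w.
Proof.
move=> w0; elim: M y => [|M IH] y y0 yM.
  by exists ord0; rewrite /= mul0r y0.
have [h|h] := leP y (M.+1%:R * w).
  have [q hq] := IH y y0 h.
  by exists (widen_ord (leqnSn _) q).
exists ord_max => /=; rewrite yM andbT; exact: ltW.
Qed.

Section null.
Context (R : realType) (n : nat) (v : 'rV[R]_n) (t K : R) (j : 'I_n).
Hypothesis vj : v 0 j != 0.
Hypothesis K0 : 0 < K.

Lemma dotp_rV (x : n.-tuple R) : dotp (rV_of_tuple x) v = \sum_i tnth x i * v 0 i.
Proof. by rewrite /dotp; apply: eq_bigr => i _; rewrite mxE. Qed.

Definition piece : set (n.-tuple R) :=
  [set x | dotp (rV_of_tuple x) v = t /\ forall i, `|tnth x i| <= K].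

Lemma piece_null : lebesgue_null piece.
Proof.
move=> eps e0.
pose c : R := `|v 0 j|.
have c0 : 0 < c by rewrite normr_gt0.
pose Sv : R := \sum_i `|v 0 i|.
have Sv0 : 0 <= Sv by apply: sumr_ge0 => i _.
pose W : R := Sv / c + 1.
have W0 : 0 < W by rewrite /W; apply: ltr_pwDr => //; apply: divr_ge0 => //; exact: ltW.
pose Q : R := 2 * W * (2 * K) ^+ n / eps.
have [M hM] : exists M : nat, Q < M.+1%:R.
  by exists (Num.Def.trunc Q); exact: truncnS_gt.
pose N := M.+1.
have N0 : 0 < N%:R :> R by rewrite ltr0n.
pose dl : R := 2 * K / N%:R.
have dl0 : 0 < dl by rewrite /dl; apply: divr_gt0 => //; rewrite mulr_gt0.
pose w : R := 2 * W * dl / N%:R.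
have w0 : 0 < w by rewrite /w divr_gt0 // mulr_gt0 // mulr_gt0.
pose T := {ffun 'I_n -> 'I_N}.
pose lo (p : T) i := - K + (p i)%:R * dl.
pose cen (p : T) := (t - \sum_(i | i != j) v 0 i * lo p i) / v 0 j.
pose la (p : T) i := if i == j then cen p - W * dl + (p j)%:R * w else lo p i.
pose wd i := if i == j then w else dl.
have wd0 i : 0 < wd i by rewrite /wd; case: ifP.
pose A (p : T) := [tuple la p i | i < n].
pose B (p : T) := [tuple la p i + wd i | i < n].
pose pd : T := [ffun => ord0].
pose e := index_enum T.
pose a k := nth (A pd) (map A e) k.
pose b k := nth (A pd) (map B e) k.
have ab k i : tnth (a k) i <= tnth (b k) i.
  rewrite /a /b; case: (ltnP k (size e)) => hk.
    rewrite !(nth_map pd) // !tnth_mktuple lerDl; exact: ltW.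
  by rewrite !nth_default ?size_map.
exists a, b; split => //; split.
  move=> x [hx hK]; rewrite dotp_rV in hx.
  have q0 (i : 'I_n) : {q : 'I_N | q%:R * dl <= tnth x i + K <= q.+1%:R * dl}.
    apply: cid; apply: grid => //.
      by move: (hK i); rewrite ler_norml => /andP[h _]; lra.
    rewrite /dl mulrC divfK; last by rewrite lt0r_neq0.
    by move: (hK i); rewrite ler_norml => /andP[_ h]; lra.
  pose p0 : T := [ffun i => sval (q0 i)].
  have hlo i : lo p0 i <= tnth x i <= lo p0 i + dl.
    rewrite /lo ffunE; case: (q0 i) => q /= /andP[h1 h2].
    move: h2; rewrite -addn1 natrD mulrDl mul1r => h2.
    apply/andP; split; lra.
  have hcen : `|tnth x j - cen p0| <= W * dl.
    have e1 : (tnth x j - cen p0) * v 0 j =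
        \sum_(i | i != j) v 0 i * (lo p0 i - tnth x i).
      rewrite (bigD1 j) //= in hx.
      rewrite mulrBl /cen divfK //.
      rewrite -hx [in RHS](eq_bigr (fun i => v 0 i * lo p0 i - tnth x i * v 0 i)); last first.
        by move=> i _; rewrite mulrBr [v 0 i * tnth x i]mulrC.
      rewrite sumrB; lra.
    have e2 : `|tnth x j - cen p0| * c <= Sv * dl.
      rewrite /c -normrM e1; apply: le_trans (ler_norm_sum _ _ _) _.
      apply: le_trans (_ : \sum_(i | i != j) `|v 0 i| * dl <= _).
        apply: ler_sum => i _; rewrite normrM ler_wpM2l //.
        have := hlo i; rewrite ler_norml => /andP[h1 h2]; apply/andP; split; lra.
      rewrite /Sv -mulr_suml ler_wpM2r ?(ltW dl0) // [X in _ <= X](bigD1 j) //= lerDr.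
      by [].  
    have e3 : `|tnth x j - cen p0| <= Sv * dl / c by rewrite ler_pdivlMr.
    apply: le_trans e3 _; rewrite /W mulrDl mul1r mulrAC lerDl; exact: ltW.
  have [r hr] : exists r : 'I_N, r%:R * w <= tnth x j - cen p0 + W * dl <= r.+1%:R * w.
    apply: grid => //.
      by move: hcen; rewrite ler_norml => /andP[h _]; lra.
    rewrite /w [X in _ <= X]mulrC divfK ?lt0r_neq0 //.
    by move: hcen; rewrite ler_norml => /andP[_ h]; lra.
  pose p : T := [ffun i => if i == j then r else p0 i].
  have cenE : cen p = cen p0.
    rewrite /cen; congr ((_ - _) / _); apply: eq_bigr => i ij.
    by rewrite /lo ffunE (negbTE ij).
  exists (index p e) => //.
  have pe : (index p e < size e)%N by rewrite index_mem mem_index_enum.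
  rewrite /a /b !(nth_map pd) // nth_index ?mem_index_enum // => i.
  rewrite !tnth_mktuple /la /wd; case: eqP => [->|/eqP ij].
    rewrite cenE ffunE eqxx; move: hr => /andP[h1 h2].
    move: h2; rewrite -addn1 natrD [(_ + 1) * w]mulrDl mul1r => h2; apply/andP; split; lra.
  have := hlo i; by rewrite /lo !ffunE (negbTE ij).
have vol0 k : 0 <= box_volume (a k) (b k).
  by apply: prodr_ge0 => i _; rewrite subr_ge0 ab.
rewrite (nneseries_split 0 (size e)); last by move=> k _; rewrite lee_fin vol0.
rewrite eseries0 ?adde0; last first.
  move=> k hk _; rewrite /box_volume /a /b !nth_default ?size_map // (bigD1 j) //=.
  by rewrite subrr mul0r.
rewrite sumEFin lte_fin add0n.
have -> : \sum_(0 <= k < size e) box_volume (a k) (b k) = \sum_(p : T) \prod_i wd i.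
  rewrite [RHS](big_nth pd) /=; apply: eq_big_nat => k hk.
  move: hk => /andP[_ hk]; rewrite /box_volume /a /b !(nth_map pd) //.
  by apply: eq_bigr => i _; rewrite !tnth_mktuple addrAC subrr add0r.
rewrite sumr_const card_ffun !card_ord.
have n0 : (0 < n)%N by apply: leq_ltn_trans (ltn_ord j).
pose m := n.-1.
have hn : n = m.+1 by rewrite /m prednK.
have -> : \prod_i wd i = w * dl ^+ m.
  rewrite (bigD1 j) //= /wd eqxx; congr (_ * _).
  rewrite (eq_bigr (fun _ => dl)); last by move=> i /negbTE ->.
  by rewrite prodr_const cardC1 card_ord.
have -> : (w * dl ^+ m) *+ (N ^ n) = Q * eps / N%:R.
  rewrite -mulr_natr natrX /Q /w /dl hn expr_div_n !exprS.
  field; rewrite ?expf_neq0 ?lt0r_neq0 //.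
rewrite ltr_pdivrMr // mulrC ltr_pM2l //.
Qed.


End null.
Section level.
Context (R : realType) d (T : measurableType d) (P : probability T R) (phi : T -> R).
Hypothesis mphi : measurable_fun setT phi.
Hypothesis atom0 : forall t, P [set x | phi x = t] = 0%E.

Let mpre (B : set R) : measurable B -> measurable (phi @^-1` B).
Proof. by move=> mB; have := mphi measurableT _ mB; rewrite setTI. Qed.

Lemma meas_ge t : measurable [set x | t <= phi x].
Proof.
have -> : [set x | t <= phi x] = phi @^-1` `[t, +oo[.
  by apply/seteqP; split => x /=; rewrite in_itv /= andbT.
exact: mpre.
Qed.

Lemma meas_gt t : measurable [set x | t < phi x].
Proof.
have -> : [set x | t < phi x] = phi @^-1` `]t, +oo[.
  by apply/seteqP; split => x /=; rewrite in_itv /= andbT.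
exact: mpre.
Qed.

Lemma meas_eq t : measurable [set x | phi x = t].
Proof.
have -> : [set x | phi x = t] = phi @^-1` [set t] by [].
exact: mpre.
Qed.

Local Open Scope ereal_scope.

Lemma ge_left (a : \bar R) (t : R) : (forall s, (s < t)%R -> a <= P [set x | (s <= phi x)%R]) ->
  a <= P [set x | (t <= phi x)%R].
Proof.
move=> H.
pose F k := [set x | (t - k.+1%:R^-1 <= phi x)%R].
have mF k : measurable (F k) by exact: meas_ge.
have eq : \bigcap_k F k = [set x | (t <= phi x)%R].
  apply/seteqP; split => x /=.
    move=> Hx; rewrite leNgt; apply/negP => ltx.
    have [k hk] := ltr_add_invr ltx.
    have := Hx k I; rewrite /F /= lerBlDr => /(lt_le_trans hk); by rewrite ltxx.
  move=> tx k _; rewrite /F /=; apply: le_trans tx; rewrite lerBlDr lerDl //.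
have ni : nonincreasing_seq F.
  move=> i j ij; apply/subsetPset => x; rewrite /F /=; apply: le_trans.
  rewrite lerB // lef_pV2 ?posrE ?ltr0n // ler_nat //.
have cv := nonincreasing_cvg_mu (mu := P) (F := F)
   (le_lt_trans (probability_le1 _ (mF 0%N)) (ltry 1)) mF
   (ltac:(rewrite eq; exact: meas_ge)) ni.
rewrite -eq -(cvg_lim _ cv) //; apply: lime_ge; first by apply/cvg_ex; eexists; exact: cv.
apply: nearW => k /=; apply: H; rewrite ltrBlDr ltrDl //.
Qed.

Lemma gt_right (a : \bar R) (t : R) : (forall s, (t < s)%R -> P [set x | (s <= phi x)%R] <= a) ->
  P [set x | (t < phi x)%R] <= a.
Proof.
move=> H.
pose F k := [set x | (t + k.+1%:R^-1 <= phi x)%R].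
have mF k : measurable (F k) by exact: meas_ge.
have eq : \bigcup_k F k = [set x | (t < phi x)%R].
  apply/seteqP; split => x /=.
    by move=> [k _]; rewrite /F /=; apply: lt_le_trans; rewrite ltrDl.
  move=> tx; have [k hk] := ltr_add_invr tx; exists k => //; exact: ltW.
have nd : nondecreasing_seq F.
  move=> i j ij; apply/subsetPset => x; rewrite /F /=; apply: le_trans.
  rewrite lerD2l lef_pV2 ?posrE ?ltr0n // ler_nat //.
have cv := nondecreasing_cvg_mu (mu := P) (F := F) mF
   (ltac:(rewrite eq; exact: meas_gt)) nd.
rewrite -eq -(cvg_lim _ cv) //; apply: lime_le; first by apply/cvg_ex; eexists; exact: cv.
apply: nearW => k /=; apply: H; rewrite ltrDl //.
Qed.

Lemma ge_gt (t : R) : P [set x | (t <= phi x)%R] = P [set x | (t < phi x)%R].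
Proof.
have -> : [set x | (t <= phi x)%R] = [set x | (t < phi x)%R] `|` [set x | (phi x = t)%R].
  apply/seteqP; split => x /=.
    by rewrite le_eqVlt => /orP[/eqP ->|]; [right|left].
  by move=> [/ltW //| ->].
transitivity (P [set x | (t < phi x)%R] + P [set x | phi x = t])%E.
  apply: measureU; [exact: meas_gt|exact: meas_eq|].
  by apply/seteqP; split => x // [/= + e]; rewrite e ltxx.
by rewrite atom0 adde0.
Qed.

Lemma level_exists (al a b : R) : (a <= b)%R ->
  al%:E <= P [set x | (a <= phi x)%R] -> P [set x | (b < phi x)%R] <= al%:E ->
  exists2 t, (a <= t <= b)%R & P [set x | (t <= phi x)%R] = al%:E.
Proof.
move=> ab Ha Hb.
pose E := [set t | (a <= t <= b)%R /\ al%:E <= P [set x | (t <= phi x)%R]].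
have E0 : E !=set0 by exists a; rewrite /E /= lexx ab.
have ubE : ubound E b by move=> s [/andP[]].
have hs : has_sup E by split => //; exists b.
pose ts := sup E.
have ats : (a <= ts)%R by apply: sup_upper_bound => //; rewrite /E /= lexx ab.
have tsb : (ts <= b)%R by apply: ge_sup.
exists ts; first by rewrite ats tsb.
apply/eqP; rewrite eq_le; apply/andP; split; last first.
  apply: ge_left => s sts.
  have [e [Ee1 Ee2] he] := sup_adherent (E := E) (eps := ts - s) (ltac:(by rewrite subr_gt0)) hs.
  apply: (le_trans Ee2); apply: le_measure; rewrite ?inE; try exact: meas_ge.
  move=> x /=; apply: le_trans; apply: ltW; move: he; by rewrite /ts opprB addrCA subrr addr0.
rewrite ge_gt; apply: gt_right => s tss.
have [sb|bs] := leP s b.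
  rewrite leNgt; apply/negP => hlt.
  have : E s by split; [rewrite sb (le_trans ats (ltW tss)) | exact: ltW].
  move/(sup_upper_bound hs); rewrite leNgt tss //.
apply: (le_trans _ Hb); apply: le_measure; rewrite ?inE; [exact: meas_ge|exact: meas_gt|].
move=> x /=; exact: lt_le_trans.
Qed.

End level.

Arguments piece {R n}.
Arguments piece_null {R n v t K j}.
Arguments dotp_rV {R n}.
Arguments meas_ge {R d T phi}.
Arguments meas_gt {R d T phi}.
Arguments meas_eq {R d T phi}.
Arguments level_exists {R d T P phi}.

Section final.
Context (R : realType) (n : nat).

Lemma dotpC (x y : 'rV[R]_n) : dotp x y = dotp y x.
Proof. by rewrite /dotp; apply: eq_bigr => i _; rewrite mulrC. Qed.

Lemma dotp_cont (v : 'rV[R]_n) : continuous (fun x : 'rV[R]_n => dotp x v).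
Proof.
rewrite /dotp.
suff H (s : seq 'I_n) : continuous (fun x : 'rV[R]_n => \sum_(i <- s) x 0 i * v 0 i) by [].
elim: s => [|i s IH].
  have -> : (fun x : 'rV[R]_n => \sum_(i <- [::]) x 0 i * v 0 i) = (fun=> 0 : R).
    by apply/funext => x; rewrite big_nil.
  exact: cst_continuous.
have -> : (fun x : 'rV[R]_n => \sum_(j <- i :: s) x 0 j * v 0 j) =
    (fun x => x 0 i * v 0 i + \sum_(j <- s) x 0 j * v 0 j).
  by apply/funext => x; rewrite big_cons.
move=> x; apply: (@continuousD _ R^o _ (fun y : 'rV[R]_n => y 0 i * v 0 i)); last exact: IH.
apply: (@continuousM _ _ (fun y : 'rV[R]_n => y 0 i) (fun=> v 0 i)).
  exact: coord_continuous.
exact: cst_continuous.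
Qed.

Lemma phi_meas (v : 'rV[R]_n) :
  measurable_fun setT (fun x : n.-tuple R => dotp (rV_of_tuple x) v).
Proof.
have -> : (fun x : n.-tuple R => dotp (rV_of_tuple x) v) =
   (fun x => \sum_(i <- index_enum 'I_n) tnth x i * v 0 i).
  by apply: funext => x; rewrite dotp_rV.
apply: measurable_sum => i.
apply: measurable_realfun.measurable_funM => //; exact: measurable_tnth.
Qed.

Lemma hyper_null (mu : probability (n.-tuple R) R) (v : 'rV[R]_n) (t : R) :
  continuous_prob mu -> dotp v v = 1 ->
  mu [set x | dotp (rV_of_tuple x) v = t] = 0%E.
Proof.
move=> cp hv.
have [j vj] : exists j, v 0 j != 0.
  case: (pselect (exists j, v 0 j != 0)) => // nj; exfalso.
  have : dotp v v = 0.
    rewrite /dotp big1 // => i _.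
    have -> : v 0 i = 0 by apply/eqP; apply/negPn/negP => h; apply: nj; exists i.
    by rewrite mulr0.
  by rewrite hv => /eqP; rewrite oner_eq0.
have mphi := phi_meas v.
pose Kt (K : R) := [tuple K | i < n].
have pieceE (K : R) : piece v t K = [set x | dotp (rV_of_tuple x) v = t] `&` box (Kt (- K)) (Kt K).
  apply/seteqP; split => x /=.
    by move=> [h1 h2]; split => // i; rewrite !tnth_mktuple -ler_norml.
  by move=> [h1 h2]; split => // i; rewrite ler_norml; have := h2 i; rewrite !tnth_mktuple.
have mpiece (K : R) : measurable (piece v t K).
  rewrite pieceE; apply: measurableI; last exact: box_meas.
  exact: (meas_eq mphi).
have HE : [set x | dotp (rV_of_tuple x) v = t] = \bigcup_k piece v t k.+1%:R.
  apply/seteqP; split => x; last by move=> [k _ []].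
  move=> hx.
  pose s := \sum_i `|tnth x i|.
  exists (Num.Def.trunc s) => //; split => // i.
  apply: le_trans (ltW (truncnS_gt s)).
  rewrite /s (bigD1 i) //= lerDl; exact: sumr_ge0.
have : mu.-negligible (\bigcup_k piece v t k.+1%:R).
  apply: negligible_bigcup => k; exists (piece v t k.+1%:R); split => //.
  apply: cp => //; apply: piece_null vj _; exact: ltr0Sn.
rewrite -HE => /measure_negligible; apply.
by rewrite HE; apply: bigcupT_measurable.
Qed.

End final.

Theorem mainTheorem4 (R : realType) (n : nat)
  (mu : probability (n.-tuple R) R) (alpha : R) (S : set 'rV[R]_n) :
  continuous_prob mu ->
  0 <= alpha <= 1 ->
  compact S -> connected S ->
  ((Num.max alpha (1 - alpha))%:E <= muR mu S)%E ->
  exists f : 'rV[R]_n -> 'rV[R]_n,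
    (forall v, unit_sphere R n v ->
       muR mu (halfspace_pos v (dotp v (f v))) = alpha%:E) /\
    (forall v, unit_sphere R n v -> S (f v)).
Proof.
move=> cp /andP[a0 a1] cS cnS hS.
have mS : measurable (rV_of_tuple @^-1` S).
  apply: closed_meas; apply: compact_closed => //; exact: norm_hausdorff.
have [r hr] : exists r : R, muR mu S = r%:E.
  by exists (fine (muR mu S)); rewrite fineK // fin_num_measure.
rewrite hr lee_fin ge_max in hS; case/andP: hS => har h1r.
have S0 : S !=set0.
  case: (pselect (S !=set0)) => // /set0P/negP; rewrite negbK => /eqP S0.
  move: hr; rewrite /muR S0 preimage_set0 measure0 => /eqP; rewrite eq_sym eqe => /eqP r0.
  exfalso; lra.
have key : forall v, exists s, unit_sphere R n v ->
    S s /\ muR mu (halfspace_pos v (dotp v s)) = alpha%:E.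
  move=> v; case: (pselect (unit_sphere R n v)); last first.
    by case: S0 => s0 Ss0 nv; exists s0.
  move=> hv.
  pose psi := fun x : 'rV[R]_n => dotp x v.
  have cpsi : {within S, continuous psi} by apply: continuous_subspaceT; exact: dotp_cont.
  have [smin smS hmin] := EVT_min_rV S0 cS cpsi.
  have [smax sMS hmax] := EVT_max_rV S0 cS cpsi.
  pose phi := fun x : n.-tuple R => psi (rV_of_tuple x).
  have mphi : measurable_fun setT phi by exact: phi_meas.
  have atom0 : forall t, mu [set x | phi x = t] = 0%E.
    by move=> t; apply: hyper_null.
  have ab : psi smin <= psi smax by exact: hmin.
  move/set_mem: smS => smS; move/set_mem: sMS => sMS.
  have Ha : (alpha%:E <= mu [set x | (psi smin <= phi x)%R])%E.
    apply: le_trans (_ : (r%:E <= _)%E); first by rewrite lee_fin.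
    rewrite -hr; apply: le_measure; rewrite ?inE //; first exact: (meas_ge mphi).
    move=> x Sx; apply: hmin; rewrite inE; exact: Sx.
  have Hb : (mu [set x | (psi smax < phi x)%R] <= alpha%:E)%E.
    apply: le_trans (_ : (mu (~` (rV_of_tuple @^-1` S)) <= _)%E).
      apply: le_measure; rewrite ?inE //; [exact: (meas_gt mphi)|exact: measurableC|].
      move=> x /= hx Sx; have := hmax (rV_of_tuple x); rewrite inE => /(_ Sx).
      by rewrite leNgt hx.
    rewrite probability_setC // -/(muR mu S) hr -EFinB lee_fin; lra.
  have [t /andP[t1 t2] ht] := level_exists mphi atom0 _ _ _ ab Ha Hb.
  have I : is_interval [set psi x | x in S].
    by apply/connected_intervalP; exact: connected_continuous_connected.
  have [s Ss st] : [set psi x | x in S] t.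
    apply: (I (psi smin) (psi smax)) => //; [by exists smin|by exists smax|].
    by rewrite t1 t2.
  exists s => _; split => //.
  rewrite /muR /halfspace_pos dotpC; rewrite -/(psi s) st; exact: ht.
have [f hf] := choice key.
by exists f; split => v hv; have [] := hf v hv.
Qed.
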